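(* Let $\mathcal{X}$ be a Polish space, $\mathcal{L}:\mathcal{X}\to[-\infty,\infty]$ measurable, $P\in\mathcal{P}(\mathcal{X})$, $D$ a pre-divergence such that $Q\mapsto D(Q\|P)$ is convex, and $c$ a cost function with $c(x,x)=0$ for all $x$. Suppose there exists $\epsilon>0$ such that $\mathcal{L}\in L^1(Q)$ for all $Q\in\mathcal{P}(\mathcal{X})$ with $D^c(Q\|P)\leq\epsilon$. Then $\mathcal{L}\in L^1(Q)$ for all $Q\in\mathcal{P}(\mathcal{X})$ with $D^c(Q\|P)<\infty$.
   Context: $\mathcal{P}(\mathcal{X})$ is the set of Borel probability measures on the Polish space $\mathcal{X}$. A pre-divergence is $D:\mathcal{P}(\mathcal{X})\times\mathcal{P}(\mathcal{X})\to[0,\infty]$ with $D(\mu\|\mu)=0$ for all $\mu$. A cost function is a lower semicontinuous $c:\mathcal{X}\times\mathcal{X}\to[0,\infty]$, with OT cost $C(\mu,\nu)=\inf\{\int c\,d\pi:\pi_1=\mu,\pi_2=\nu\}$. $D^c(\nu\|\mu)=\inf_{\eta\in\mathcal{P}(\mathcal{X})}\{D(\eta\|\mu)+C(\eta,\nu)\}$. *)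

(* Defs.v *)
From HB Require Import structures.
From mathcomp Require Import all_boot all_order all_algebra.
From mathcomp Require Import all_classical all_reals all_analysis.
From mathcomp Require Import measurable_realfun.
Set Implicit Arguments. Unset Strict Implicit. Unset Printing Implicit Defensive.
Import Order.TTheory GRing.Theory Num.Theory.
Import numFieldNormedType.Exports.
Local Open Scope classical_set_scope.
Local Open Scope ring_scope.
Local Open Scope ereal_scope.

Notation Borel X := (g_sigma_algebraType (@open X)).

(* A Polish space is presented as a complete (pseudo)metric space which is
   Hausdorff (so the pseudometric is a metric) and separable. *)
Definition polish_space (R : realType) (X : completePseudoMetricType R) : Prop :=
  hausdorff_space X /\ exists S : set X, countable S /\ dense S.

Definition coupling (R : realType) (X : ptopologicalType)
    (mu nu : probability (Borel X) R)
    (pi : probability (Borel X * Borel X)%type R) : Prop :=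
  (forall A : set (Borel X), measurable A -> pi (A `*` setT) = mu A) /\
  (forall B : set (Borel X), measurable B -> pi (setT `*` B) = nu B).

Definition OT_cost (R : realType) (X : ptopologicalType)
    (c : (Borel X * Borel X)%type -> \bar R) (mu nu : probability (Borel X) R)
    : \bar R :=
  ereal_inf [set \int[pi]_z c z | pi in coupling mu nu].

(* D is a pre-divergence on P(X) (D eta mu stands for D(eta || mu)). *)
Definition pre_divergence (R : realType) (X : ptopologicalType)
    (D : probability (Borel X) R -> probability (Borel X) R -> \bar R) : Prop :=
  (forall eta mu, 0 <= D eta mu) /\ (forall mu, D mu mu = 0).

Definition Dc (R : realType) (X : ptopologicalType)
    (D : probability (Borel X) R -> probability (Borel X) R -> \bar R)
    (c : (Borel X * Borel X)%type -> \bar R) (nu mu : probability (Borel X) R)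
    : \bar R :=
  ereal_inf [set D eta mu + OT_cost c eta nu | eta in [set: probability (Borel X) R]].

Definition convex_in_first (R : realType) (X : ptopologicalType)
    (D : probability (Borel X) R -> probability (Borel X) R -> \bar R)
    (P : probability (Borel X) R) : Prop :=
  forall (Q1 Q2 Q : probability (Borel X) R) (t : R),
    (0 <= t <= 1)%R ->
    (forall A : set (Borel X), measurable A ->
       Q A = t%:E * Q1 A + (1 - t)%:E * Q2 A) ->
    D Q P <= t%:E * D Q1 P + (1 - t)%:E * D Q2 P.

(* Main.v *)
Require Import Defs.
From HB Require Import structures.
From mathcomp Require Import all_boot all_order all_algebra.
From mathcomp Require Import all_classical all_reals all_analysis.
From mathcomp Require Import measurable_realfun.
Import Order.TTheory GRing.Theory Num.Theory.
Import numFieldNormedType.Exports.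
Local Open Scope classical_set_scope.
Local Open Scope ring_scope.
Local Open Scope ereal_scope.

Section mix.
Context d (T : measurableType d) (R : realType) (t : R) (t0 : (0 <= t)%R)
  (t1 : (t <= 1)%R) (m1 m2 : probability T R).

Lemma mix_t1 : (0 <= 1 - t)%R. Proof. by rewrite subr_ge0. Qed.

Definition mix (A : set T) : \bar R :=
  (NngNum t0)%:num%:E * m1 A + (NngNum mix_t1)%:num%:E * m2 A.

Lemma mixE : mix = measure_add (mscale (NngNum t0) m1)
   (mscale (NngNum mix_t1) m2).
Proof. by apply/funext => A; rewrite measure_addE. Qed.

Let mix0 : mix set0 = 0.
Proof. by rewrite /mix !measure0 !mule0 adde0. Qed.
Let mix_ge0 A : 0 <= mix A.
Proof. by rewrite /mix adde_ge0 // mule_ge0 // lee_fin subr_ge0. Qed.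
Let mix_sa : semi_sigma_additive mix.
Proof. by rewrite mixE; exact: measure_semi_sigma_additive. Qed.

HB.instance Definition _ := isMeasure.Build _ _ _ mix mix0 mix_ge0 mix_sa.

Let mix_setT : mix setT = 1.
Proof.
rewrite /mix !probability_setT !mule1 -EFinD.
by congr (_%:E); rewrite addrC subrK.
Qed.

HB.instance Definition _ := Measure_isProbability.Build _ _ _ mix mix_setT.

Lemma ge0_integral_mix (f : T -> \bar R) : measurable_fun setT f ->
  (forall x, 0 <= f x) ->
  \int[mix]_x f x = t%:E * \int[m1]_x f x + (1 - t)%:E * \int[m2]_x f x.
Proof.
move=> mf f0; rewrite mixE ge0_integral_measure_add//.
by rewrite !ge0_integral_mscale.
Qed.

End mix.
Arguments mix {d T R t} t0 t1 m1 m2.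

Lemma mix_apply d (T : measurableType d) (R : realType) (t : R) (t0 : (0 <= t)%R)
  (t1 : (t <= 1)%R) (m1 m2 : probability T R) A :
  mix t0 t1 m1 m2 A = t%:E * m1 A + (1 - t)%:E * m2 A.
Proof. by []. Qed.


Section diag.
Context (R : realType) (X : ptopologicalType) (P : probability (Borel X) R).

Definition diagf (x : Borel X) : (Borel X * Borel X)%type := (x, x).

Lemma measurable_diagf : measurable_fun setT diagf.
Proof. exact: measurable_fun_pair. Qed.

Definition diagm (A : set (Borel X * Borel X)%type) : \bar R :=
  P (diagf @^-1` A).

Let diagm0 : diagm set0 = 0.
Proof. by rewrite /diagm preimage_set0 measure0. Qed.

Let diagm_ge0 A : 0 <= diagm A.
Proof. exact: measure_ge0. Qed.

Let diagm_sa : semi_sigma_additive diagm.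
Proof.
move=> F mF tF mUF; rewrite /diagm preimage_bigcup.
apply: measure_semi_sigma_additive.
- by move=> n; rewrite -[X in measurable X]setTI; exact: measurable_diagf.
- apply/trivIsetP => /= i j _ _ ij; rewrite -preimage_setI.
  by move/trivIsetP : tF => /(_ _ _ _ _ ij) ->//; rewrite preimage_set0.
- by rewrite -preimage_bigcup -[X in measurable X]setTI; exact: measurable_diagf.
Qed.

HB.instance Definition _ := isMeasure.Build _ _ _ diagm
  diagm0 diagm_ge0 diagm_sa.

Let diagm_setT : diagm setT = 1.
Proof. by rewrite /diagm preimage_setT probability_setT. Qed.

HB.instance Definition _ := Measure_isProbability.Build _ _ _ diagm diagm_setT.

Lemma diagm_coupling : coupling P P diagm.
Proof.
split => A mA; rewrite /diagm; congr (P _); apply/seteqP; split => x /=.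
- by case.
- by move=> Ax; split.
- by case.
- by move=> Ax; split.
Qed.

End diag.
Arguments diagm {R X} P.
Arguments diagf {X}.
Import HBNNSimple.

Section isup.
Context d (T : measurableType d) (R : realType) (mu : {measure set T -> \bar R}).

Lemma int_sup (f : T -> \bar R) : (forall x, 0 <= f x) ->
  \int[mu]_x f x = ereal_sup [set sintegral mu h |
    h in [set h : {nnsfun T >-> R} | forall x, (h x)%:E <= f x]].
Proof. by move=> f0; rewrite ge0_integralTE. Qed.

Lemma int_le_sup (f : T -> \bar R) (M : \bar R) : (forall x, 0 <= f x) ->
  (forall h : {nnsfun T >-> R}, (forall x, (h x)%:E <= f x) ->
     \int[mu]_x (h x)%:E <= M) ->
  \int[mu]_x f x <= M.
Proof.
move=> f0 H; rewrite int_sup//; apply: ge_ereal_sup => _ [h hf <-].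
by rewrite -integralT_nnsfun; exact: H.
Qed.

Lemma int_nnsfun_le (f : T -> \bar R) (h : {nnsfun T >-> R}) :
  (forall x, 0 <= f x) -> (forall x, (h x)%:E <= f x) ->
  \int[mu]_x (h x)%:E <= \int[mu]_x f x.
Proof.
move=> f0 hf; rewrite integralT_nnsfun int_sup//.
by apply: ereal_sup_ubound; exists h.
Qed.

End isup.

Section costs.
Context (R : realType) (X : ptopologicalType).

Lemma mix_cost (t : R) (t0 : (0 <= t)%R) (t1 : (t <= 1)%R)
  (pi1 pi2 : probability (Borel X * Borel X)%type R)
  (c : (Borel X * Borel X)%type -> \bar R) : (forall z, 0 <= c z) ->
  \int[mix t0 t1 pi1 pi2]_z c z <=
  t%:E * \int[pi1]_z c z + (1 - t)%:E * \int[pi2]_z c z.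
Proof.
move=> c0; apply: int_le_sup => // h hc.
have mh : measurable_fun setT (fun x => (h x)%:E).
  by apply/measurable_EFinP; exact: measurable_funP.
rewrite ge0_integral_mix//; last by move=> x; rewrite lee_fin.
apply: leeD; apply: lee_wpmul2l; rewrite ?lee_fin ?subr_ge0//.
- exact: int_nnsfun_le.
- exact: int_nnsfun_le.
Qed.

Lemma diag_cost (P : probability (Borel X) R)
  (c : (Borel X * Borel X)%type -> \bar R) : (forall z, 0 <= c z) ->
  (forall x, c (x, x) = 0) ->
  \int[diagm P]_z c z <= 0.
Proof.
move=> c0 cd; apply: int_le_sup => // h hc.
have mh : measurable_fun setT (fun x => (h x)%:E).
  by apply/measurable_EFinP; exact: measurable_funP.
have := ge0_integral_pushforward (@measurable_diagf X) P measurableT mh.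
move=> /(_ _) E; rewrite [X in X <= _](E _); last by move=> y _; rewrite lee_fin.
rewrite integral0_eq // => x _ /=.
apply/eqP; rewrite eq_le; apply/andP; split.
  by have := hc (x, x); rewrite cd.
by rewrite lee_fin; exact: fun_ge0.
Qed.

End costs.

Theorem lemma4 (R : realType) (X : completePseudoMetricType R)
  (L : Borel X -> \bar R) (P : probability (Borel X) R)
  (D : probability (Borel X) R -> probability (Borel X) R -> \bar R)
  (c : (X * X)%type -> \bar R) :
  polish_space X ->
  measurable_fun setT L ->
  pre_divergence D ->
  convex_in_first D P ->
  lower_semicontinuous c ->
  (forall z, 0 <= c z) ->
  (forall x : X, c (x, x) = 0) ->
  (exists eps : R, (0 < eps)%R /\
     forall Q : probability (Borel X) R,
       Dc D c Q P <= eps%:E -> Q.-integrable setT L) ->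
  forall Q : probability (Borel X) R,
    Dc D c Q P < +oo -> Q.-integrable setT L.
Proof.
move=> _ mL [Dge0 DPP] Dconv _ c0 cd [eps [eps0 Heps]] Q DcQ.
have [_ [eta _ <-] etalt] := ereal_inf_lt DcQ.
have OT0 : 0 <= OT_cost c eta Q.
  apply: le_ereal_inf_tmp => _ [pi _ <-]; exact: integral_ge0.
have : D eta P + OT_cost c eta Q \is a fin_num.
  by rewrite ge0_fin_numE// adde_ge0.
rewrite fin_numD => /andP[Dfin OTfin].
move: OTfin; rewrite ge0_fin_numE// => OTlt.
have [_ [pi cpl <-] pilt] := ereal_inf_lt OTlt.
have pi0 : 0 <= \int[pi]_z c z by exact: integral_ge0.
set dd := fine (D eta P).
set k := fine (\int[pi]_z c z).
have dd0 : (0 <= dd)%R by rewrite fine_ge0.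
have k0 : (0 <= k)%R by rewrite fine_ge0.
have ddE : D eta P = dd%:E by rewrite fineK.
have kE : \int[pi]_z c z = k%:E by rewrite fineK// ge0_fin_numE.
pose s := (dd + k + eps)%R.
have s0 : (0 < s)%R by rewrite /s ltr_wpDl// addr_ge0.
pose t := (eps / s)%R.
have t0 : (0 <= t)%R by rewrite /t divr_ge0// ltW.
have tgt0 : (0 < t)%R by rewrite /t divr_gt0.
have ts : (t * s = eps)%R by rewrite /t divfK// gt_eqF.
have t1 : (t <= 1)%R.
  rewrite /t ler_pdivrMr// mul1r /s lerDr addr_ge0//.
have tdk : (t * (dd + k) <= eps)%R.
  rewrite -ts /s ler_wpM2l// lerDl ltW//.
pose Q' : probability (Borel X) R := mix t0 t1 Q P.
pose eta' : probability (Borel X) R := mix t0 t1 eta P.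
pose pi' : probability (Borel X * Borel X)%type R := mix t0 t1 pi (diagm P).
have cpl' : coupling eta' Q' pi'.
  split => A mA.
  - change (t%:E * pi (A `*` setT) + (1-t)%:E * diagm P (A `*` setT) =
      t%:E * eta A + (1-t)%:E * P A).
    by rewrite cpl.1// (diagm_coupling _ _ P).1.
  - change (t%:E * pi (setT `*` A) + (1-t)%:E * diagm P (setT `*` A) =
      t%:E * Q A + (1-t)%:E * P A).
    by rewrite cpl.2// (diagm_coupling _ _ P).2.
have HD : D eta' P <= t%:E * dd%:E.
  have := Dconv eta P eta' t; rewrite t0 t1 => /(_ isT) /(_ (fun A _ => erefl)).
  by rewrite DPP mule0 adde0 ddE.
have HC : OT_cost c eta' Q' <= t%:E * k%:E.
  apply: le_trans (ereal_inf_lbound _) _; first by exists pi'.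
  apply: le_trans (@mix_cost _ _ _ t0 t1 pi (diagm P) _ c0) _.
  rewrite kE; have := @diag_cost _ _ P _ c0 cd.
  move=> H; rewrite -[leRHS]adde0 leeD2l//.
  have -> : \int[diagm P]_z c z = 0.
    by apply/eqP; rewrite eq_le H integral_ge0.
  by rewrite mule0.
have DcQ' : Dc D c Q' P <= eps%:E.
  apply: le_trans (ereal_inf_lbound _) _; first by exists eta'.
  apply: le_trans (leeD HD HC) _.
  by rewrite -EFinM -EFinM -EFinD lee_fin -mulrDr.
have HQ' := Heps Q' DcQ'. have [_ intlt] := integrableP _ _ _ HQ'.
apply/integrableP; split => //.
move: intlt; rewrite ge0_integral_mix//; last first.
  by apply: measurableT_comp => //.
have iQ0 : 0 <= \int[Q]_x `|L x| by exact: integral_ge0.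
have iP0 : 0 <= \int[P]_x `|L x| by exact: integral_ge0.
have h2 : (1 - t)%:E * \int[P]_x `|L x| != -oo.
  by rewrite gt_eqF// (@lt_le_trans _ _ 0) ?ltNy0 // mule_ge0 // lee_fin subr_ge0.
move=> H; rewrite ltNge leye_eq; apply/negP => /eqP IE; move: H.
by rewrite IE gt0_muley ?lte_fin// addye// ltxx.
Qed.
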